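(* Let $p\ge 1$, $\sigma^2>0$, let $\boldsymbol\beta=(\beta_1,\dots,\beta_p)^\top\in\mathbb{R}^p$ be not identically zero (entries of arbitrary sign), and let $\Delta=\mathrm{diag}(\delta_1^2,\dots,\delta_p^2)$ with all $\delta_i^2>0$. Let $\Sigma=\sigma^2\boldsymbol\beta\boldsymbol\beta^\top+\Delta$. Assume $\sum_{i=1}^p \beta_i/\delta_i^2\ge 0$ and $\beta_1\le\beta_2\le\cdots\le\beta_p$. 1. Let $R_1=1/\sigma^2$ and, for $2\le i\le p$, $$R_i=\frac{1}{\sigma^2}+\sum_{j=1}^{i-1}\frac{\beta_j}{\delta_j^2}(\beta_j-\beta_i)=\frac{1}{\sigma^2}+\sum_{j=1}^{i}\frac{\beta_j}{\delta_j^2}(\beta_j-\beta_i).$$ Then there exists $s\le p$ such that $0<R_1\le R_2\le\cdots\le R_s\ge R_{s+1}\ge\cdots\ge R_p$. In particular, with $\ell=\max\{i: R_i>0\}$, one has $R_i>0$ if and only if $i\le \ell$, and the sequence $(R_i)$ crosses zero at most once. 2. Let $w^L$ be the unique solution of $\min_{w\in\mathbb{R}^p} w^\top\Sigma w$ subject to $w^\top\mathbf{1}_p=1$ and $w_i\ge0$ for all $i$; let $K=\{i: w^L_i>0\}$ and $k=|K|$. Then $k=\ell$ and $K=\{1,2,\dots,\ell\}$. Moreover, letting $\Sigma^K$ be the $k\times k$ submatrix of $\Sigma$ formed by its first $k$ rows and columns and $$w^K=\frac{(\Sigma^K)^{-1}\mathbf{1}_k}{\mathbf{1}_k^\top(\Sigma^K)^{-1}\mathbf{1}_k},$$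 the solution $w^L$ is given by $w^L_i=w^K_i$ for $i=1,\dots,k$ and $w^L_i=0$ for $i=k+1,\dots,p$.
   Context: $\mathbf{1}_m$ denotes the all-ones vector in $\mathbb{R}^m$. The sign normalization $\sum_i\beta_i/\delta_i^2\ge0$ and the increasing ordering of the $\beta_i$ are standing assumptions under which the theorem is stated (replacing $\boldsymbol\beta$ by $-\boldsymbol\beta$ and reordering assets do not change the problem). *)

(* Defs.v *)
(* The dimension p >= 1 is encoded as p = n.+1; indices are
   0-based ordinals 'I_n.+1 (paper index i corresponds to ordinal i-1). *)
From HB Require Import structures.
From mathcomp Require Import all_boot all_order all_algebra.
Set Implicit Arguments. Unset Strict Implicit. Unset Printing Implicit Defensive.
Import Order.TTheory GRing.Theory Num.Theory.
Local Open Scope ring_scope.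

Section Defs.
Variables (R : realFieldType) (n : nat).
Local Notation p := n.+1.

Definition Sigma (sigma2 : R) (beta : 'cV[R]_p) (d2 : 'I_p -> R) : 'M[R]_p :=
  sigma2 *: (beta *m beta^T) + diag_mx (\row_i d2 i).

Definition Rseq (sigma2 : R) (beta : 'cV[R]_p) (d2 : 'I_p -> R) (i : 'I_p) : R :=
  1 / sigma2 + \sum_(j < p | (j < i)%N) beta j 0 / d2 j * (beta j 0 - beta i 0).

Definition ell (sigma2 : R) (beta : 'cV[R]_p) (d2 : 'I_p -> R) : nat :=
  \max_(i < p | (0 < Rseq sigma2 beta d2 i)%R) i.+1.

Definition feasible (w : 'cV[R]_p) : Prop :=
  (w^T *m (const_mx 1 : 'cV[R]_p)) 0 0 = 1 /\ forall i, 0 <= w i 0.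

Definition quadf (S : 'M[R]_p) (w : 'cV[R]_p) : R := (w^T *m S *m w) 0 0.

Definition is_minimizer (S : 'M[R]_p) (w : 'cV[R]_p) : Prop :=
  feasible w /\ forall v, feasible v -> quadf S w <= quadf S v.

(* the k x k leading principal submatrix (meaningful for k <= p) *)
Definition lead_sub (k : nat) (A : 'M[R]_p) : 'M[R]_k :=
  \matrix_(i < k, j < k) A (inord i) (inord j).

Definition wK (k : nat) (A : 'M[R]_p) : 'cV[R]_k :=
  let SK := lead_sub k A in
  let one : 'cV[R]_k := const_mx 1 in
  ((one^T *m invmx SK *m one) 0 0)^-1 *: (invmx SK *m one).

End Defs.

(* Main.v *)
Require Import Defs.
From HB Require Import structures.
From mathcomp Require Import all_boot all_order all_algebra.
From mathcomp Require Import ring lra.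
Set Implicit Arguments. Unset Strict Implicit. Unset Printing Implicit Defensive.
Import Order.TTheory GRing.Theory Num.Theory.
Local Open Scope ring_scope.

Section Gen.
Variables (R : realFieldType) (m : nat) (s2 : R) (bb dd : 'I_m -> R).
Hypothesis hs2 : 0 < s2.
Hypothesis hdd : forall i, 0 < dd i.

Definition isSig (A : 'M[R]_m) := forall i j, A i j = s2 * bb i * bb j + (i == j)%:R * dd i.

Lemma Sig_mul A (v : 'cV[R]_m) i : isSig A ->
  (A *m v) i 0 = s2 * bb i * (\sum_j bb j * v j 0) + dd i * v i 0.
Proof.
move=> hA; rewrite mxE.
rewrite (eq_bigr (fun j => s2 * bb i * (bb j * v j 0) + (i == j)%:R * dd i * v j 0)); last first.
  by move=> j _; rewrite hA; ring.
rewrite big_split /= -mulr_sumr; congr (_ + _).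
rewrite (bigD1 i) //= eqxx big1 ?addr0; first by rewrite mul1r.
by move=> j hji; rewrite eq_sym (negPf hji) mul0r mul0r.
Qed.

Definition Qg (v : 'cV[R]_m) := s2 * (\sum_j bb j * v j 0)^+2 + \sum_i dd i * v i 0 ^+ 2.

Lemma Sig_quad A (v : 'cV[R]_m) : isSig A ->
  \sum_i v i 0 * (A *m v) i 0 = Qg v.
Proof.
move=> hA; rewrite /Qg.
rewrite (eq_bigr (fun i => s2 * (\sum_j bb j * v j 0) * (bb i * v i 0) + dd i * v i 0 ^+ 2)); last first.
  by move=> i _; rewrite Sig_mul //; ring.
by rewrite big_split /= -mulr_sumr; ring.
Qed.

Lemma Qg_ge0 v : 0 <= Qg v.
Proof.
rewrite /Qg; apply: addr_ge0.
  by apply: mulr_ge0; [exact: ltW | exact: sqr_ge0].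
by apply: sumr_ge0 => i _; apply: mulr_ge0; [exact: ltW | exact: sqr_ge0].
Qed.

Lemma Qg_split A x y : isSig A ->
  Qg x = Qg y + Qg (x - y) + 2 * \sum_i (x i 0 - y i 0) * (A *m y) i 0.
Proof.
move=> hA.
rewrite (eq_bigr (fun i => (x i 0 - y i 0) * (s2 * bb i * (\sum_j bb j * y j 0) + dd i * y i 0))); last first.
  by move=> i _; rewrite Sig_mul.
rewrite /Qg.
have hXY : \sum_j bb j * (x - y) j 0 = \sum_j bb j * x j 0 - \sum_j bb j * y j 0.
  by rewrite -sumrB; apply: eq_bigr => j _; rewrite !mxE; ring.
have hD : \sum_i dd i * x i 0 ^+ 2 = \sum_i dd i * y i 0 ^+ 2 + \sum_i dd i * (x - y) i 0 ^+ 2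
   + 2 * \sum_i (x i 0 - y i 0) * (dd i * y i 0).
  by rewrite mulr_sumr -!big_split /=; apply: eq_bigr => i _; rewrite !mxE; ring.
have hC : \sum_i (x i 0 - y i 0) * (s2 * bb i * (\sum_j bb j * y j 0) + dd i * y i 0) =
   s2 * (\sum_j bb j * y j 0) * (\sum_j bb j * x j 0 - \sum_j bb j * y j 0)
   + \sum_i (x i 0 - y i 0) * (dd i * y i 0).
  set Y := \sum_j bb j * y j 0.
  rewrite (eq_bigr (fun i => s2 * Y * (bb i * x i 0) - s2 * Y * (bb i * y i 0) + (x i 0 - y i 0) * (dd i * y i 0))); last by move=> i _; ring.
  by rewrite big_split sumrB /= -!mulr_sumr mulrBr.
rewrite hXY hD hC; ring.
Qed.

Lemma Sig_pd (v : 'cV[R]_m) : Qg v <= 0 -> v = 0.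
Proof.
move=> h; rewrite /Qg in h.
have h1 : 0 <= s2 * (\sum_j bb j * v j 0)^+2 by apply: mulr_ge0; [exact: ltW | exact: sqr_ge0].
have h2 : forall i, 0 <= dd i * v i 0 ^+ 2 by move=> i; apply: mulr_ge0; [exact: ltW | exact: sqr_ge0].
have h3 : 0 <= \sum_i dd i * v i 0 ^+ 2 by apply: sumr_ge0 => i _.
have h4 : \sum_i dd i * v i 0 ^+ 2 = 0 by lra.
apply/matrixP => i j; rewrite (ord1 j) mxE.
have := psumr_eq0P (fun i _ => h2 i) h4 (i := i) isT.
move/eqP; rewrite mulf_eq0 sqrf_eq0 => /orP[|/eqP //].
by rewrite gt_eqF.
Qed.

Lemma Sig_unit A : isSig A -> A \in unitmx.
Proof.
move=> hA; rewrite unitmxE unitfE; apply/negP => /det0P [v vn0 hv].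
move/negP: vn0; apply.
have hsym : A^T = A.
  apply/matrixP => i j; rewrite mxE !hA eq_sym; congr (_ + _); first ring.
  by case: eqP => [->|_] /=; rewrite ?mul0r.
have hx : A *m v^T = 0 by rewrite -hsym -trmx_mul hv trmx0.
suff : v^T = 0 by move/(congr1 trmx); rewrite trmxK trmx0 => ->.
apply: Sig_pd; rewrite -(Sig_quad (v^T) hA) hx.
by rewrite big1 // => i _; rewrite !mxE mulr0.
Qed.

End Gen.

Lemma card_lt (p l : nat) (h : (l <= p)%N) : #|[set i : 'I_p | (i < l)%N]| = l.
Proof.
have -> : [set i : 'I_p | (i < l)%N] = widen_ord h @: setT.
  apply/setP => i; rewrite inE; apply/idP/imsetP.
  - move=> hi; exists (Ordinal hi); rewrite ?inE //; exact: val_inj.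
  - by case=> j _ ->; rewrite /= ltn_ord.
rewrite card_imset ?cardsT ?card_ord //.
by move=> a b /(congr1 val) /= /val_inj.
Qed.

Lemma mono_up (R : realFieldType) (f : nat -> R) a b :
  (forall m, (a <= m)%N -> (m < b)%N -> f m <= f m.+1) ->
  forall i j, (a <= i)%N -> (i <= j)%N -> (j <= b)%N -> f i <= f j.
Proof.
move=> h i j ai ij jb; elim: j ij jb => [|j IH].
  by rewrite leqn0 => /eqP -> .
rewrite leq_eqVlt => /orP [/eqP -> //| ij] jb.
exact: le_trans (IH ij (ltnW jb)) (h j (leq_trans ai ij) jb).
Qed.

Lemma mono_down (R : realFieldType) (f : nat -> R) a b :
  (forall m, (a <= m)%N -> (m < b)%N -> f m.+1 <= f m) ->
  forall i j, (a <= i)%N -> (i <= j)%N -> (j <= b)%N -> f j <= f i.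
Proof.
move=> h i j ai ij jb; elim: j ij jb => [|j IH].
  by rewrite leqn0 => /eqP -> .
rewrite leq_eqVlt => /orP [/eqP -> //| ij] jb.
exact: le_trans (h j (leq_trans ai ij) jb) (IH ij (ltnW jb)).
Qed.

Section Main.
Variables (R : realFieldType) (n : nat) (sigma2 : R) (beta : 'cV[R]_n.+1) (d2 : 'I_n.+1 -> R).
Hypothesis hsigma : 0 < sigma2.
Hypothesis hd2 : forall i, 0 < d2 i.
Hypothesis hsign : 0 <= \sum_(i < n.+1) beta i 0 / d2 i.
Hypothesis hord : forall i j : 'I_n.+1, (i <= j)%N -> beta i 0 <= beta j 0.

Local Notation p := n.+1.
Definition bn (m : nat) := beta (inord m) 0.
Definition dn (m : nat) := d2 (inord m).
Definition tn m := bn m / dn m.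
Definition Sn k := \sum_(j < k) tn j.
Definition Fn k x := 1 / sigma2 + \sum_(j < k) tn j * (bn j - x).
Definition rn m := Fn m (bn m).

Lemma bnE (i : 'I_p) : beta i 0 = bn i. Proof. by rewrite /bn inord_val. Qed.
Lemma dnE (i : 'I_p) : d2 i = dn i. Proof. by rewrite /dn inord_val. Qed.
Lemma dn_pos m : 0 < dn m. Proof. exact: hd2. Qed.

Lemma bn_mono a b : (a <= b)%N -> (b <= n)%N -> bn a <= bn b.
Proof.
move=> ab hb; apply: hord; rewrite !inordK ?ltnS //; exact: leq_trans ab hb.
Qed.

Lemma Sn_step k : Sn k.+1 = Sn k + tn k.
Proof. by rewrite /Sn big_ord_recr. Qed.

Lemma Fn_step k x : Fn k.+1 x = Fn k x + tn k * (bn k - x).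
Proof. by rewrite /Fn big_ord_recr /= addrA. Qed.

Lemma Fn_aff k x y : Fn k y = Fn k x - (y - x) * Sn k.
Proof.
elim: k => [|k IH]; first by rewrite /Fn /Sn !big_ord0; ring.
rewrite !Fn_step Sn_step IH; ring.
Qed.

Lemma Rseq_rn (i : 'I_p) : Rseq sigma2 beta d2 i = rn i.
Proof.
rewrite /Rseq /rn /Fn (big_ord_widen _ (fun j => tn j * (bn j - bn i)) (ltnW (ltn_ord i))).
congr (_ + _); apply: eq_bigr => j _.
by rewrite /tn /bn /dn !inord_val.
Qed.

Lemma rn_step m : rn m.+1 = rn m - (bn m.+1 - bn m) * Sn m.+1.
Proof. by rewrite /rn (Fn_aff m.+1 (bn m) (bn m.+1)) Fn_step subrr mulr0 addr0. Qed.

Lemma Sp : 0 <= Sn p.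
Proof.
move: hsign; rewrite /Sn (eq_bigr (fun j : 'I_p => tn j)) // => j _.
by rewrite /tn /bn /dn !inord_val.
Qed.

Lemma tn_le0 m : bn m <= 0 -> tn m <= 0.
Proof. move=> h; rewrite /tn mulr_le0_ge0 // invr_ge0 ltW //; exact: dn_pos. Qed.

Lemma tn_ge0 m : 0 <= bn m -> 0 <= tn m.
Proof. move=> h; rewrite /tn divr_ge0 // ltW //; exact: dn_pos. Qed.

Lemma Sn_up k m : (k <= m)%N -> (m <= p)%N -> 0 < Sn k -> 0 < Sn m.
Proof.
move=> km mp hk; elim: m km mp => [|m IH].
  by rewrite leqn0 => /eqP <-.
rewrite leq_eqVlt => /orP [/eqP <- //| km] mp.
have hm := IH km (ltnW mp).
rewrite Sn_step.
case: (leP 0 (tn m)) => ht; first lra.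
exfalso.
have hb : bn m < 0.
  rewrite ltNge; apply/negP => hb.
  by have := tn_ge0 hb; lra.
have : Sn m <= 0.
  rewrite /Sn; apply: sumr_le0 => j _; apply: tn_le0.
  apply: le_trans (ltW hb); apply: bn_mono; first exact: ltnW (ltn_ord j).
  by rewrite -ltnS.
lra.
Qed.

Definition sN := find (fun i => 0 < Sn i.+1) (iota 0 n).

Lemma sN_le : (sN <= n)%N.
Proof. by have := find_size (fun i => 0 < Sn i.+1) (iota 0 n); rewrite size_iota. Qed.

Lemma sN_before m : (m < sN)%N -> Sn m.+1 <= 0.
Proof.
move=> h; have := before_find 0%N h; rewrite nth_iota ?add0n /=.
  by move/negbT; rewrite -leNgt.
exact: leq_trans h sN_le.
Qed.

Lemma sN_after m : (sN <= m)%N -> (m < n)%N -> 0 < Sn m.+1.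
Proof.
move=> h1 h2.
have hs : (sN < size (iota 0 n))%N by rewrite size_iota; exact: leq_ltn_trans h1 h2.
have hs' := hs; rewrite -has_find in hs'.
have := nth_find 0%N hs'; rewrite nth_iota ?add0n /=; last by rewrite size_iota in hs.
move=> hS; apply: (Sn_up _ _ hS); [exact: h1 | exact: ltnW h2].
Qed.

Lemma rn_up m : (m < sN)%N -> rn m <= rn m.+1.
Proof.
move=> h; rewrite rn_step.
have h1 : 0 <= bn m.+1 - bn m.
  rewrite subr_ge0; apply: bn_mono => //; exact: leq_trans h sN_le.
have := mulr_ge0_le0 h1 (sN_before h); lra.
Qed.

Lemma rn_down m : (sN <= m)%N -> (m < n)%N -> rn m.+1 <= rn m.
Proof.
move=> h hn; rewrite rn_step.
have h1 : 0 <= bn m.+1 - bn m by rewrite subr_ge0; apply: bn_mono.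
have := mulr_ge0 h1 (ltW (sN_after h hn)); lra.
Qed.

Lemma rn0 : 0 < rn 0.
Proof. by rewrite /rn /Fn big_ord0 addr0 divr_gt0 // ltr01. Qed.

Lemma rn_prefix i j : (i <= j)%N -> (j <= n)%N -> 0 < rn j -> 0 < rn i.
Proof.
move=> ij jn hj; case: (leqP i sN) => h.
  apply: lt_le_trans rn0 _; exact: (@mono_up _ _ 0%N _ (fun m _ h => rn_up h)) _ _ (leq0n _) (leq0n _) h.
exact: lt_le_trans hj (mono_down rn_down (ltnW h) ij jn).
Qed.

Local Notation lN := (ell sigma2 beta d2).

Lemma ell_spec (i : 'I_p) : 0 < rn i <-> (i < lN)%N.
Proof.
split.
  move=> h; rewrite /ell.
  apply: (@leq_bigmax_cond _ (fun i : 'I_p => 0 < Rseq sigma2 beta d2 i) (fun i : 'I_p => i.+1) i).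
  by rewrite Rseq_rn.
move=> hi; case: (ltP 0 (rn i)) => // hle; exfalso.
move: hi; rewrite ltnNge => /negP; apply.
apply/bigmax_leqP => j; rewrite Rseq_rn => hj.
rewrite ltnNge; apply/negP => ij.
have := rn_prefix ij (ltn_ord j) hj; lra.
Qed.

Lemma ell_specN m : (m <= n)%N -> (0 < rn m <-> (m < lN)%N).
Proof. by move=> hm; have := ell_spec (inord m); rewrite inordK. Qed.

Lemma lN_pos : (0 < lN)%N.
Proof. by have := ell_specN (leq0n n); case=> h _; apply: h; exact: rn0. Qed.

Lemma lN_le : (lN <= p)%N.
Proof. by apply/bigmax_leqP => i _; exact: ltn_ord. Qed.

Lemma part1 : exists s : 'I_p,
      0 < Rseq sigma2 beta d2 ord0
      /\ (forall i j : 'I_p, (i <= j)%N -> (j <= s)%N -> Rseq sigma2 beta d2 i <= Rseq sigma2 beta d2 j)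
      /\ (forall i j : 'I_p, (s <= i)%N -> (i <= j)%N -> Rseq sigma2 beta d2 j <= Rseq sigma2 beta d2 i).
Proof.
exists (inord sN); rewrite inordK ?ltnS ?sN_le //.
split; first by rewrite Rseq_rn; exact: rn0.
split=> i j h1 h2; rewrite !Rseq_rn.
  exact: (@mono_up _ _ 0%N _ (fun m _ h => rn_up h)) (leq0n _) h1 h2.
have hj : (j <= n)%N by rewrite -ltnS. have := mono_down rn_down h1 h2 hj. done.
Qed.

Lemma part1b (i : 'I_p) : 0 < Rseq sigma2 beta d2 i <-> (i < lN)%N.
Proof. rewrite Rseq_rn; exact: ell_spec. Qed.


Lemma rn_lpos k : lN = k.+1 -> 0 < rn k.
Proof.
move=> hk; have hkn : (k <= n)%N by rewrite -ltnS -hk lN_le.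
by apply/(ell_specN hkn); rewrite hk.
Qed.

Lemma rn_after m : (lN <= m)%N -> (m <= n)%N -> rn m <= 0.
Proof.
move=> h hm; case: (ltP 0 (rn m)) => // hpos.
by have := (ell_specN hm).1 hpos; rewrite ltnNge h.
Qed.

Lemma lN_succ : exists k, lN = k.+1.
Proof. by exists lN.-1; rewrite prednK // lN_pos. Qed.

Definition Bq := Sn lN.
Definition cq := Fn lN 0.
Definition fq x := Fn lN x.

Lemma fq_aff x : fq x = cq - x * Bq.
Proof. by rewrite /fq /cq /Bq (Fn_aff lN 0 x) subr0. Qed.

Lemma B_ge0 : 0 <= Bq.
Proof.
have [k hk] := lN_succ.
case: (ltnP lN p) => hl.
  have hkn : (k < n)%N by move: hl; rewrite hk ltnS.
  rewrite /Bq hk.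
  have h1 := rn_step k.
  have h2 : rn k.+1 <= 0 by apply: rn_after; rewrite -?hk //.
  have h3 : 0 < rn k := rn_lpos hk.
  have h4 : 0 <= bn k.+1 - bn k by rewrite subr_ge0 bn_mono.
  case: (leP 0 (Sn k.+1)) => // hneg.
  have := mulr_ge0_le0 h4 (ltW hneg); lra.
rewrite /Bq (_ : lN = p); last by apply/eqP; rewrite eqn_leq lN_le hl.
exact: Sp.
Qed.

Lemma fq_pos m : (m < lN)%N -> 0 < fq (bn m).
Proof.
have [k hk] := lN_succ; move=> hm.
have hkn : (k <= n)%N by rewrite -ltnS -hk lN_le.
have e : fq (bn k) = rn k by rewrite /fq hk /rn Fn_step subrr mulr0 addr0.
have h3 := rn_lpos hk.
have hmk : (m <= k)%N by rewrite -ltnS -hk.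
have h4 : 0 <= (bn k - bn m) * Bq.
  by apply: mulr_ge0; [rewrite subr_ge0; exact: bn_mono | exact: B_ge0].
move: e; rewrite !fq_aff mulrBl in h4 * => e; lra.
Qed.

Lemma fq_nonpos m : (lN <= m)%N -> (m <= n)%N -> fq (bn m) <= 0.
Proof.
move=> h hm.
have hln : (lN <= n)%N := leq_trans h hm.
have e : fq (bn lN) = rn lN by [].
have h3 := rn_after (leqnn lN) hln.
have h4 : 0 <= (bn m - bn lN) * Bq.
  by apply: mulr_ge0; [rewrite subr_ge0; exact: bn_mono | exact: B_ge0].
move: e; rewrite !fq_aff mulrBl in h4 * => e; lra.
Qed.

Definition un m := if (m < lN)%N then fq (bn m) / dn m else 0.

Lemma un_ge0 m : 0 <= un m.
Proof.
rewrite /un; case: ifP => h //.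
apply: divr_ge0; [exact: ltW (fq_pos h) | exact: ltW (dn_pos m)].
Qed.

Lemma un_pos m : (m < lN)%N -> 0 < un m.
Proof. by move=> h; rewrite /un h; apply: divr_gt0; [exact: fq_pos | exact: dn_pos]. Qed.

Lemma un_out m : (lN <= m)%N -> un m = 0.
Proof. by move=> h; rewrite /un ltnNge h. Qed.

Definition Zq := \sum_(i < p) un i.

Lemma Z_pos : 0 < Zq.
Proof.
rewrite /Zq big_ord_recl.
apply: (lt_le_trans (un_pos lN_pos)); rewrite lerDl.
by apply: sumr_ge0 => i _; exact: un_ge0.
Qed.

Definition wq : 'cV[R]_p := \col_i (un i / Zq).
Lemma wqE (i : 'I_p) : wq i 0 = un i / Zq. Proof. by rewrite mxE. Qed.

Lemma feas_sum (v : 'cV[R]_p) : feasible v -> \sum_i v i 0 = 1.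
Proof. by case=> h _; rewrite -h mxE; apply: eq_bigr => j _; rewrite !mxE mulr1. Qed.

Lemma wq_feas : feasible wq.
Proof.
split.
  rewrite mxE (eq_bigr (fun j : 'I_p => un j / Zq)); last by move=> j _; rewrite !mxE mulr1.
  by rewrite -mulr_suml divff //; exact: lt0r_neq0 Z_pos.
move=> i; rewrite wqE; apply: divr_ge0; [exact: un_ge0 | exact: ltW Z_pos].
Qed.

Local Notation S := (Sigma sigma2 beta d2).

Lemma Sigma_isSig : isSig sigma2 (fun i => beta i 0) d2 S.
Proof.
move=> i j; rewrite /Sigma !mxE big_ord1 !mxE mulr_natl mulrA.
done.
Qed.


Lemma quadfE (v : 'cV[R]_p) : quadf S v = Qg sigma2 (fun i => beta i 0) d2 v.
Proof.
rewrite /quadf -mulmxA mxE -(Sig_quad v Sigma_isSig).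
by apply: eq_bigr => i _; rewrite mxE.
Qed.

Lemma sum_bu : \sum_(j < p) bn j * un j = Bq / sigma2.
Proof.
have e1 : \sum_(j < p) bn j * un j = \sum_(j < lN) tn j * (cq - bn j * Bq).
  rewrite (big_ord_widen p (fun j => tn j * (cq - bn j * Bq)) lN_le) [RHS]big_mkcond /=.
  apply: eq_bigr => j _; rewrite /un; case: ifP => _; last by rewrite mulr0.
  by rewrite fq_aff /tn; ring.
have cqE : cq = 1 / sigma2 + \sum_(j < lN) tn j * bn j.
  by rewrite /cq /Fn; congr (_ + _); apply: eq_bigr => j _; rewrite subr0.
rewrite e1.
rewrite (eq_bigr (fun j : 'I_lN => cq * tn j - Bq * (tn j * bn j))); last by move=> j _; ring.
rewrite sumrB -!mulr_sumr cqE /Bq /Sn; ring.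
Qed.

Lemma sum_buZ : \sum_(j < p) bn j * (un j / Zq) = Bq / sigma2 / Zq.
Proof. by rewrite -sum_bu mulr_suml; apply: eq_bigr => j _; rewrite mulrA. Qed.

Local Notation gq i := ((S *m wq) i 0).

Lemma gqE (i : 'I_p) : gq i = sigma2 * bn i * (Bq / sigma2 / Zq) + dn i * (un i / Zq).
Proof.
rewrite (Sig_mul wq i Sigma_isSig) /= -sum_buZ bnE dnE wqE.
by congr (_ * _ + _); apply: eq_bigr => j _; rewrite bnE wqE.
Qed.

Definition lam := cq / Zq.

Lemma gq_in (i : 'I_p) : (i < lN)%N -> gq i = lam.
Proof.
move=> h; rewrite gqE /un h fq_aff /lam.
have h1 := lt0r_neq0 hsigma; have h2 := lt0r_neq0 (dn_pos i); have h3 := lt0r_neq0 Z_pos.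
by field; rewrite h1 h2 h3.
Qed.

Lemma gq_out (i : 'I_p) : (lN <= i)%N -> lam <= gq i.
Proof.
move=> h.
have h1 := lt0r_neq0 hsigma; have h3 := lt0r_neq0 Z_pos.
have e : gq i - lam = - fq (bn i) / Zq.
  by rewrite gqE (un_out h) fq_aff /lam; field; rewrite ?h1 ?h3.
rewrite -subr_ge0 e; apply: divr_ge0; last exact: ltW Z_pos.
by rewrite oppr_ge0; apply: fq_nonpos; rewrite // -ltnS.
Qed.

Lemma cq_pos : 0 < cq.
Proof.
rewrite /cq /Fn.
have : 0 <= \sum_(j < lN) tn j * (bn j - 0).
  apply: sumr_ge0 => j _; rewrite subr0 /tn mulrAC -expr2.
  apply: divr_ge0; [exact: sqr_ge0 | exact: ltW (dn_pos _)].
have : 0 < 1 / sigma2 by rewrite divr_gt0 // ltr01.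
lra.
Qed.

Lemma lam_pos : 0 < lam.
Proof. exact: divr_gt0 cq_pos Z_pos. Qed.

Lemma cross_ge0 (v : 'cV[R]_p) : feasible v -> 0 <= \sum_i (v i 0 - wq i 0) * gq i.
Proof.
move=> hv.
have e1 : \sum_i (v i 0 - wq i 0) * gq i = \sum_i v i 0 * gq i - \sum_i wq i 0 * gq i.
  by rewrite -sumrB; apply: eq_bigr => i _; ring.
have e2 : \sum_i wq i 0 * gq i = lam.
  rewrite (eq_bigr (fun i => wq i 0 * lam)).
    by rewrite -mulr_suml (feas_sum wq_feas) mul1r.
  move=> i _; case: (ltnP i lN) => h; first by rewrite gq_in.
  by rewrite wqE (un_out h) !mul0r.
have e3 : lam <= \sum_i v i 0 * gq i.
  rewrite -[lam]mul1r -(feas_sum hv) mulr_suml; apply: ler_sum => i _.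
  apply: ler_wpM2l; first exact: hv.2.
  by case: (ltnP i lN) => h; [rewrite gq_in | exact: gq_out].
rewrite e1 e2; lra.
Qed.

Lemma wq_min : is_minimizer S wq.
Proof.
split; first exact: wq_feas.
move=> v hv; rewrite !quadfE (Qg_split v wq Sigma_isSig).
have := cross_ge0 hv; have := @Qg_ge0 _ _ sigma2 (fun i => beta i 0) d2 hsigma hd2 (v - wq).
lra.
Qed.

Lemma wq_uniq w : is_minimizer S w -> w = wq.
Proof.
case=> hw hmin.
have h1 := hmin wq wq_feas.
rewrite !quadfE (Qg_split w wq Sigma_isSig) in h1.
have h2 := cross_ge0 hw.
have h3 : Qg sigma2 (fun i => beta i 0) d2 (w - wq) <= 0 by lra.
by move/(Sig_pd hsigma hd2)/eqP: h3; rewrite subr_eq0 => /eqP.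
Qed.

Lemma K_eq : [set i : 'I_p | 0 < wq i 0] = [set i : 'I_p | (i < lN)%N].
Proof.
apply/setP => i; rewrite !inE wqE; case: (ltnP i lN) => h.
  by apply/idP; apply: divr_gt0; [exact: un_pos | exact: Z_pos].
by rewrite (un_out h) mul0r ltxx.
Qed.

Definition M := lead_sub lN S.

Lemma hinj (i j : 'I_lN) : (inord i == inord j :> 'I_p) = (i == j).
Proof.
have hi : (i < p)%N := leq_trans (ltn_ord i) lN_le.
have hj : (j < p)%N := leq_trans (ltn_ord j) lN_le.
by rewrite -val_eqE /= !inordK.
Qed.

Lemma M_isSig : isSig sigma2 (fun i : 'I_lN => bn i) (fun i : 'I_lN => dn i) M.
Proof. by move=> i j; rewrite /M /lead_sub mxE Sigma_isSig hinj. Qed.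

Definition uvec : 'cV[R]_lN := \col_i wq (inord i) 0.

Lemma uvecE (i : 'I_lN) : uvec i 0 = un i / Zq.
Proof. by rewrite mxE wqE inordK // (leq_trans (ltn_ord i) lN_le). Qed.

Lemma sum_reindex (h : nat -> R) : (forall m, (lN <= m)%N -> h m = 0) ->
  \sum_(j < lN) h j = \sum_(j < p) h j.
Proof.
move=> hz; rewrite (big_ord_widen p h lN_le) big_mkcond /=; apply: eq_bigr => j _.
by case: ifP => // /negbT; rewrite -leqNgt => hj; rewrite hz.
Qed.

Lemma MuE : M *m uvec = lam *: const_mx 1.
Proof.
apply/matrixP => i k; rewrite (ord1 k) (Sig_mul uvec i M_isSig) /=.
rewrite (eq_bigr (fun j : 'I_lN => bn j * (un j / Zq))); last by move=> j _; rewrite uvecE.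
rewrite uvecE (sum_reindex (h := fun j => bn j * (un j / Zq))); last first.
  by move=> m hm; rewrite (un_out hm) mul0r mulr0.
rewrite sum_buZ.
have hi : (i < lN)%N := ltn_ord i.
have hip : (i < p)%N := leq_trans hi lN_le.
have h := gq_in (i := inord i); rewrite gqE inordK // in h.
by rewrite !mxE mulr1 -(h hi).
Qed.

Lemma M_unit : M \in unitmx.
Proof. exact: (Sig_unit hsigma (fun i => dn_pos i) M_isSig). Qed.

Lemma invM1 : invmx M *m const_mx 1 = lam^-1 *: uvec.
Proof.
have h := mulKmx M_unit uvec.
rewrite MuE -scalemxAr in h.
by rewrite -h scalerA mulVf ?scale1r //; exact: lt0r_neq0 lam_pos.
Qed.

Lemma wK_eq (i : 'I_lN) : wq (inord i) 0 = wK lN S i 0.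
Proof.
rewrite /wK /= -/M -mulmxA invM1 -scalemxAr.
have hs : ((const_mx 1 : 'cV[R]_lN)^T *m uvec) 0 0 = 1.
  rewrite mxE (eq_bigr (fun j : 'I_lN => un j / Zq)); last by move=> j _; rewrite uvecE !mxE mul1r.
  rewrite (sum_reindex (h := fun j => un j / Zq)); last by move=> m hm; rewrite (un_out hm) mul0r.
  by rewrite -mulr_suml divff //; exact: lt0r_neq0 Z_pos.
rewrite [X in X^-1]mxE hs !mxE mulr1 invrK mulrA mulfV ?mul1r; last exact: lt0r_neq0 lam_pos.
done.
Qed.

End Main.

Theorem theorem1 (R : realFieldType) (n : nat) (sigma2 : R)
  (beta : 'cV[R]_n.+1) (d2 : 'I_n.+1 -> R)
  (hsigma : 0 < sigma2)
  (hbeta : beta != 0)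
  (hd2 : forall i, 0 < d2 i)
  (hsign : 0 <= \sum_(i < n.+1) beta i 0 / d2 i)
  (hord : forall i j : 'I_n.+1, (i <= j)%N -> beta i 0 <= beta j 0) :
  let Rs := Rseq sigma2 beta d2 in
  let l := ell sigma2 beta d2 in
  let S := Sigma sigma2 beta d2 in
  (* part 1 *)
  (exists s : 'I_n.+1,
      0 < Rs ord0
      /\ (forall i j : 'I_n.+1, (i <= j)%N -> (j <= s)%N -> Rs i <= Rs j)
      /\ (forall i j : 'I_n.+1, (s <= i)%N -> (i <= j)%N -> Rs j <= Rs i))
  /\ (forall i : 'I_n.+1, 0 < Rs i <-> (i < l)%N)
  (* part 2 *)
  /\ (exists w, is_minimizer S w)
  /\ (forall w, is_minimizer S w ->
        let K := [set i : 'I_n.+1 | 0 < w i 0] in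
        #|K| = l
        /\ K = [set i : 'I_n.+1 | (i < l)%N]
        /\ (forall i : 'I_l, w (inord i) 0 = wK l S i 0)
        /\ (forall i : 'I_n.+1, (l <= i)%N -> w i 0 = 0)).
Proof.
move=> Rs l S.
split; first exact: (part1 hsigma hd2 hord).
split; first by move=> i; exact: (part1b hsigma hd2 hord).
split; first by exists (wq sigma2 beta d2); exact: (wq_min hsigma hd2 hsign hord).
move=> w hw.
have hweq := wq_uniq hsigma hd2 hsign hord hw; subst w => K.
have hK := K_eq hsigma hd2 hsign hord.
split; first by rewrite /K hK card_lt //; apply: lN_le.
split; first exact: hK.
split; first by move=> i; exact: (wK_eq hsigma hd2 hsign hord).
move=> i hi; rewrite wqE un_out ?mul0r //.
Qed.
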